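(* Let $\varphi:\mathbb{R}^n\to\mathbb{R}$ be of class $\mathcal{C}^{1,1}$ and let $x^0\in\mathbb{R}^n$ be such that, with $\Omega:=\{x\mid\varphi(x)\le\varphi(x^0)\}$, $\partial^2\varphi(x)$ is positive-definite for every $x\in\Omega$ (i.e. $\langle z,u\rangle>0$ for all $u\ne0$, $z\in\partial^2\varphi(x)(u)$) and $\Omega$ is bounded. Then there exists $\kappa>0$ such that for every $x\in\Omega$, $\langle z,w\rangle\ge\kappa\|w\|^2$ whenever $w\in\mathbb{R}^n$ and $z\in\partial^2\varphi(x)(w)$.
   Context: A function $\varphi:\mathbb{R}^n\to\mathbb{R}$ is of class $\mathcal{C}^{1,1}$ if it is continuously differentiable and $\nabla\varphi$ is Lipschitz continuous around every point. Regular normal cone: $\widehat N_\Omega(\bar z):=\{v\mid \limsup_{z\to\bar z,\,z\in\Omega}\langle v,z-\bar z\rangle/\|z-\bar z\|\le 0\}$; limiting normal cone $N_\Omega(\bar z)$: all $v$ with $z_k\to\bar z$, $z_k\in\Omega$, $v_k\to v$, $v_k\in\widehat N_\Omega(z_k)$. Coderivative: $D^*F(\bar x,\bar y)(v):=\{u\mid(u,-v)\in N_{\operatorname{gph}F}(\bar x,\bar y)\}$. $\partial^2\varphi(x)(u):=D^*(\nabla\varphi)(x,\nabla\varphi(x))(u)$. *)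

(* Defs.v *)
From HB Require Import structures.
From mathcomp Require Import all_boot all_order all_algebra.
From mathcomp Require Import reals.
Set Implicit Arguments. Unset Strict Implicit. Unset Printing Implicit Defensive.
Import Order.TTheory GRing.Theory Num.Theory.
Local Open Scope ring_scope.

Section Defs.
Variables (R : realType) (n : nat).
Notation V := 'rV[R]_n.

Definition dotp (u v : V) : R := \sum_(i < n) u ord0 i * v ord0 i.
Definition enorm (u : V) : R := Num.sqrt (dotp u u).

Definition dotp2 (p q : V * V) : R := dotp p.1 q.1 + dotp p.2 q.2.
Definition enorm2 (p : V * V) : R := Num.sqrt (dotp2 p p).

Definition is_gradient (phi : V -> R) (g : V -> V) : Prop :=
  forall x eps, 0 < eps -> exists2 delta, 0 < delta &
    forall y, enorm (y - x) < delta ->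
      `|phi y - phi x - dotp (g x) (y - x)| <= eps * enorm (y - x).

Definition continuous_map (g : V -> V) : Prop :=
  forall x eps, 0 < eps -> exists2 delta, 0 < delta &
    forall y, enorm (y - x) < delta -> enorm (g y - g x) < eps.

Definition locally_lipschitz (g : V -> V) : Prop :=
  forall x, exists L, exists2 r, 0 < r &
    forall y1 y2, enorm (y1 - x) < r -> enorm (y2 - x) < r ->
      enorm (g y1 - g y2) <= L * enorm (y1 - y2).

Definition C11 (phi : V -> R) (g : V -> V) : Prop :=
  [/\ is_gradient phi g, continuous_map g & locally_lipschitz g].

(* Regular normal cone to Omega (subset of R^n x R^n) at zbar:
   limsup_{z -> zbar, z in Omega} <v, z - zbar>/||z - zbar|| <= 0 *)
Definition regular_normal (Omega : V * V -> Prop) (zbar v : V * V) : Prop :=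
  forall eps, 0 < eps -> exists2 delta, 0 < delta &
    forall z, Omega z -> 0 < enorm2 (z - zbar) -> enorm2 (z - zbar) < delta ->
      dotp2 v (z - zbar) <= eps * enorm2 (z - zbar).

Definition seq_cvg2 (u : nat -> V * V) (l : V * V) : Prop :=
  forall eps, 0 < eps -> exists N, forall k, (N <= k)%N -> enorm2 (u k - l) < eps.

Definition limiting_normal (Omega : V * V -> Prop) (zbar v : V * V) : Prop :=
  exists (zs vs : nat -> V * V),
    [/\ forall k, Omega (zs k), seq_cvg2 zs zbar, seq_cvg2 vs v
      & forall k, regular_normal Omega (zs k) (vs k)].

Definition graph (F : V -> V) : V * V -> Prop := fun p => p.2 = F p.1.

(* Coderivative of a single-valued map F at (xbar, ybar): u in D*F(xbar,ybar)(v) *)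
Definition coderiv (F : V -> V) (xbar ybar v u : V) : Prop :=
  limiting_normal (graph F) (xbar, ybar) (u, - v).

(* Generalized Hessian: z in d^2 phi(x)(u), where g = grad phi *)
Definition gen_hessian (g : V -> V) (x u z : V) : Prop :=
  coderiv g x (g x) u z.

End Defs.

(* Main.v *)
Require Import Defs.
From HB Require Import structures.
From mathcomp Require Import all_boot all_order all_algebra.
From mathcomp Require Import reals.
From mathcomp Require Import boolp classical_sets topology normedtype.
From mathcomp Require Import ring lra.
Import Order.TTheory GRing.Theory Num.Theory.
Set Implicit Arguments. Unset Strict Implicit.
Local Open Scope ring_scope.

Section Basic.
Variables (R : realType) (n : nat).
Notation V := 'rV[R]_n.
Implicit Types u v w : V.

Lemma dotpC u v : dotp u v = dotp v u.
Proof. by apply: eq_bigr => i _; rewrite mulrC. Qed.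

Lemma dotpDl u v w : dotp (u + v) w = dotp u w + dotp v w.
Proof. by rewrite /dotp -big_split; apply: eq_bigr => i _; rewrite mxE mulrDl. Qed.

Lemma dotpZl (a : R) u v : dotp (a *: u) v = a * dotp u v.
Proof. by rewrite /dotp mulr_sumr; apply: eq_bigr => i _; rewrite mxE mulrA. Qed.

Lemma dotpNl u v : dotp (- u) v = - dotp u v.
Proof. by rewrite -scaleN1r dotpZl mulN1r. Qed.

Lemma dotpBl u v w : dotp (u - v) w = dotp u w - dotp v w.
Proof. by rewrite dotpDl dotpNl. Qed.

Lemma dotpDr u v w : dotp w (u + v) = dotp w u + dotp w v.
Proof. by rewrite dotpC dotpDl !(dotpC w). Qed.
Lemma dotpZr (a : R) u v : dotp v (a *: u) = a * dotp v u.
Proof. by rewrite dotpC dotpZl dotpC. Qed.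
Lemma dotpNr u v : dotp v (- u) = - dotp v u.
Proof. by rewrite dotpC dotpNl dotpC. Qed.
Lemma dotpBr u v w : dotp w (u - v) = dotp w u - dotp w v.
Proof. by rewrite dotpDr dotpNr. Qed.

Lemma dotp0l v : dotp 0 v = 0.
Proof. by rewrite /dotp big1 // => i _; rewrite mxE mul0r. Qed.
Lemma dotp0r v : dotp v 0 = 0.
Proof. by rewrite dotpC dotp0l. Qed.

Lemma dotpp_ge0 u : 0 <= dotp u u.
Proof. by apply: sumr_ge0 => i _; rewrite -expr2 sqr_ge0. Qed.

Lemma dotpp_eq0 u : dotp u u = 0 -> u = 0.
Proof.
move=> /eqP; rewrite psumr_eq0 => [/allP H|i _]; last by rewrite -expr2 sqr_ge0.
apply/rowP => i; rewrite mxE; have /implyP := H i (mem_index_enum _).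
by move=> /(_ isT) /eqP/eqP; rewrite mulf_eq0 orbb => /eqP.
Qed.

Lemma enorm_ge0 u : 0 <= enorm u.
Proof. exact: sqrtr_ge0. Qed.

Lemma enorm_sq u : enorm u ^+ 2 = dotp u u.
Proof. by rewrite sqr_sqrtr // dotpp_ge0. Qed.

Lemma sq_le (a b : R) : 0 <= b -> a ^+ 2 <= b ^+ 2 -> a <= b.
Proof.
move=> b0 h; apply: (le_trans (ler_norm a)).
by rewrite -(sqrtr_sqr a) -[X in _ <= X](ger0_norm b0) -sqrtr_sqr ler_sqrt // sqr_ge0.
Qed.

Lemma enorm0 : enorm (0 : V) = 0.
Proof. by rewrite /enorm dotp0l sqrtr0. Qed.

Lemma enorm_eq0 u : enorm u = 0 -> u = 0.
Proof. by move=> h; apply: dotpp_eq0; rewrite -enorm_sq h expr0n. Qed.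

Lemma CS_sq u v : dotp u v ^+ 2 <= dotp u u * dotp v v.
Proof.
have [v0|vn0] := eqVneq (dotp v v) 0.
  by rewrite v0 (dotpp_eq0 v0) dotp0r expr0n mulr0.
have vp : 0 < dotp v v by rewrite lt_neqAle eq_sym vn0 dotpp_ge0.
have := dotpp_ge0 (dotp v v *: u - dotp u v *: v).
rewrite !(dotpBl, dotpBr, dotpZl, dotpZr) (dotpC v u) => h.
have : 0 <= dotp v v * (dotp u u * dotp v v - dotp u v ^+ 2) by lra.
by rewrite pmulr_rge0 // subr_ge0.
Qed.

Lemma CS u v : `|dotp u v| <= enorm u * enorm v.
Proof.
apply: sq_le; first by rewrite mulr_ge0 // enorm_ge0.
by rewrite real_normK ?num_real // exprMn !enorm_sq CS_sq.
Qed.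

Lemma CS' u v : dotp u v <= enorm u * enorm v.
Proof. exact: le_trans (ler_norm _) (CS u v). Qed.

Lemma enormD u v : enorm (u + v) <= enorm u + enorm v.
Proof.
apply: sq_le; first by rewrite addr_ge0 // enorm_ge0.
rewrite enorm_sq dotpDl !dotpDr (dotpC v u) sqrrD !enorm_sq.
have := CS' u v; lra.
Qed.

Lemma enormZ (a : R) u : enorm (a *: u) = `|a| * enorm u.
Proof.
rewrite /enorm dotpZl dotpZr mulrA -expr2 sqrtrM ?sqr_ge0 //.
by rewrite sqrtr_sqr.
Qed.

Lemma enormN u : enorm (- u) = enorm u.
Proof. by rewrite -scaleN1r enormZ normrN normr1 mul1r. Qed.

Lemma enormB u v : enorm (u - v) <= enorm u + enorm v.
Proof. by rewrite -(enormN v) enormD. Qed.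

Lemma enorm_sub u v : enorm (u - v) = enorm (v - u).
Proof. by rewrite -enormN opprB. Qed.

Lemma enorm_coord u i : `|u ord0 i| <= enorm u.
Proof.
apply: sq_le; first exact: enorm_ge0.
rewrite real_normK ?num_real // enorm_sq /dotp (bigD1 i) //= -expr2 lerDl.
by apply: sumr_ge0 => j _; rewrite -expr2 sqr_ge0.
Qed.

Lemma enorm_coord_bound u (e : R) : 0 <= e -> (forall i, `|u ord0 i| <= e) ->
  enorm u <= n%:R * e.
Proof.
move=> e0 h; apply: sq_le; first by rewrite mulr_ge0.
rewrite enorm_sq /dotp.
apply: (@le_trans _ _ (\sum_(i < n) e ^+ 2)).
  apply: ler_sum => i _; rewrite -expr2 -real_normK ?num_real //.
  by rewrite lerXn2r ?nnegrE // (le_trans _ (h i)).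
rewrite sumr_const card_ord exprMn -[e ^+ 2 *+ n]mulr_natl.
rewrite ler_wpM2r ?sqr_ge0 //.
case: n => [|m]; first by rewrite expr0n.
by rewrite -natrX ler_nat expnS leq_pmulr.
Qed.

Lemma enorm2_sq (p : V * V) : enorm2 p ^+ 2 = enorm p.1 ^+ 2 + enorm p.2 ^+ 2.
Proof. by rewrite sqr_sqrtr ?enorm_sq // addr_ge0 // dotpp_ge0. Qed.

Lemma enorm2_ge0 (p : V * V) : 0 <= enorm2 p.
Proof. exact: sqrtr_ge0. Qed.

Lemma enorm2_l (p : V * V) : enorm p.1 <= enorm2 p.
Proof.
apply: sq_le; first exact: enorm2_ge0.
by rewrite enorm2_sq lerDl sqr_ge0.
Qed.
Lemma enorm2_r (p : V * V) : enorm p.2 <= enorm2 p.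
Proof.
apply: sq_le; first exact: enorm2_ge0.
by rewrite enorm2_sq lerDr sqr_ge0.
Qed.
Lemma enorm2_le (p : V * V) : enorm2 p <= enorm p.1 + enorm p.2.
Proof.
apply: sq_le; first by rewrite addr_ge0 // enorm_ge0.
rewrite enorm2_sq sqrrD mulr2n.
have := mulr_ge0 (enorm_ge0 p.1) (enorm_ge0 p.2); lra.
Qed.

End Basic.

Lemma archi_inv (R : realType) (eps : R) : 0 < eps ->
  exists N, forall k, (N <= k)%N -> (k.+1%:R)^-1 < eps.
Proof.
move=> e0; exists (Num.trunc (eps^-1)) => k hk.
rewrite invf_plt ?posrE ?ltr0Sn //.
apply: (lt_le_trans (truncnS_gt _)); rewrite ?ler_nat ?ltnS ?posrE ?ltr0Sn //.
Qed.

Section Normals.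
Variables (R : realType) (n : nat).
Notation V := 'rV[R]_n.
Implicit Types u v w : V.

Lemma enorm2_tri (a b c : V * V) : enorm2 (a - c) <= 2 * (enorm2 (a - b) + enorm2 (b - c)).
Proof.
apply: (le_trans (enorm2_le _)) => /=.
have e1 : a.1 - c.1 = (a.1 - b.1) + (b.1 - c.1) by rewrite addrA subrK.
have e2 : a.2 - c.2 = (a.2 - b.2) + (b.2 - c.2) by rewrite addrA subrK.
rewrite e1 e2.
have h1 := enormD (a.1 - b.1) (b.1 - c.1).
have h2 := enormD (a.2 - b.2) (b.2 - c.2).
have h3 := enorm2_l (a - b). have h4 := enorm2_r (a - b).
have h5 := enorm2_l (b - c). have h6 := enorm2_r (b - c).
simpl in *. lra.
Qed.

Lemma limiting_scale (Omega : V * V -> Prop) P u v (c : R) : 0 < c ->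
  limiting_normal Omega P (u, v) -> limiting_normal Omega P (c *: u, c *: v).
Proof.
move=> c0 [zs [vs [H1 H2 H3 H4]]].
exists zs, (fun k => (c *: (vs k).1, c *: (vs k).2)); split => //.
- move=> eps e0; have [N HN] := H3 (eps / (2 * c)) ltac:(by rewrite divr_gt0 // mulr_gt0).
  exists N => k /HN hk; apply: (le_lt_trans (enorm2_le _)) => /=.
  rewrite -!scalerBr !enormZ gtr0_norm //.
  have h1 := enorm2_l (vs k - (u, v)). have h2 := enorm2_r (vs k - (u, v)).
  simpl in *.
  have : c * (2 * enorm2 (vs k - (u, v))) < eps.
    by rewrite mulrA mulrC -ltr_pdivlMr ?mulr_gt0 // (mulrC c).
  have : c * (enorm ((vs k).1 - u) + enorm ((vs k).2 - v)) <= c * (2 * enorm2 (vs k - (u, v))).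
    by rewrite ler_pM2l //; lra.
  lra.
- move=> k eps e0; have [d d0 Hd] := H4 k (eps / c) ltac:(by rewrite divr_gt0).
  exists d => // z Oz z0 zd; have := Hd z Oz z0 zd.
  rewrite /dotp2 /= !dotpZl -mulrDr => h.
  have := ler_wpM2l (ltW c0) h.
  have -> : c * (eps / c * enorm2 (z - zs k)) = eps * enorm2 (z - zs k).
    by field; rewrite gt_eqF.
  done.
Qed.

Lemma limiting_closed (Omega : V * V -> Prop) P W :
  (forall e, 0 < e -> exists P', exists W',
     [/\ limiting_normal Omega P' W', enorm2 (P' - P) < e & enorm2 (W' - W) < e]) ->
  limiting_normal Omega P W.
Proof.
move=> H.
have H' : forall j : nat, exists QW : (V * V) * (V * V),
   [/\ Omega QW.1, regular_normal Omega QW.1 QW.2,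
       enorm2 (QW.1 - P) < (j.+1%:R)^-1 & enorm2 (QW.2 - W) < (j.+1%:R)^-1].
  move=> j; set e := (j.+1%:R : R)^-1 / 4.
  have e0 : 0 < e by rewrite divr_gt0 // invr_gt0 ltr0Sn.
  have ei : (j.+1%:R : R)^-1 = 4 * e by rewrite /e mulrC divfK // pnatr_eq0.
  rewrite ei; clearbody e.
  have [P' [W' [[zs [vs [L1 L2 L3 L4]]] h1 h2]]] := H e e0.
  have [N1 HN1] := L2 e e0; have [N2 HN2] := L3 e e0.
  exists (zs (maxn N1 N2), vs (maxn N1 N2)); split => //=.
  - have := HN1 (maxn N1 N2) (leq_maxl _ _).
    have := enorm2_tri (zs (maxn N1 N2)) P' P.
    lra.
  - have := HN2 (maxn N1 N2) (leq_maxr _ _).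
    have := enorm2_tri (vs (maxn N1 N2)) W' W.
    lra.
have [f Hf] := choice H'.
exists (fun j => (f j).1), (fun j => (f j).2); split.
- by move=> k; case: (Hf k).
- move=> eps e0; have [N HN] := archi_inv e0; exists N => k /HN hk.
  by case: (Hf k) => _ _ h _; apply: lt_trans hk.
- move=> eps e0; have [N HN] := archi_inv e0; exists N => k /HN hk.
  by case: (Hf k) => _ _ _ h; apply: lt_trans hk.
- by move=> k; case: (Hf k).
Qed.

End Normals.

Section Lip.
Variables (R : realType) (n : nat).
Notation V := 'rV[R]_n.
Implicit Types u v w : V.

Lemma regular_normal_lip (g : V -> V) a p q L r :
  0 < r -> 0 <= L ->
  (forall y1 y2, enorm (y1 - a) < r -> enorm (y2 - a) < r ->
     enorm (g y1 - g y2) <= L * enorm (y1 - y2)) ->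
  regular_normal (graph g) (a, g a) (p, q) -> enorm p <= L * enorm q.
Proof.
move=> r0 L0 Hl Hr; apply/ler_addgt0Pr => e e0.
have [p0|pn0] := eqVneq p 0.
  by rewrite p0 enorm0 addr_ge0 ?mulr_ge0 ?enorm_ge0 // ltW.
set P := enorm p.
have P0 : 0 < P.
  rewrite lt_neqAle enorm_ge0 andbT; apply/eqP => h.
  by move: pn0; rewrite (enorm_eq0 (esym h)) eqxx.
set c := 1 + L.
have c0 : 0 < c by rewrite /c; lra.
have [d d0 Hd] := Hr (e / c) (divr_gt0 e0 c0).
set m := Num.min d r.
have m0 : 0 < m by rewrite lt_min d0 r0.
have md : m <= d by rewrite ge_min lexx.
have mr : m <= r by rewrite ge_min lexx orbT.
set t := m / (2 * (P * c)).
have t0 : 0 < t by rewrite divr_gt0 // !mulr_gt0.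
set y := a + t *: p.
have ya : y - a = t *: p by rewrite /y addrAC subrr add0r.
have tP : enorm (t *: p) = t * P by rewrite enormZ gtr0_norm.
have tPm : t * P * c = m / 2 by rewrite /t; field; rewrite ?gt_eqF.
have tP0 : 0 < t * P by rewrite mulr_gt0.
have tPc : t * P <= t * P * c.
  by rewrite -{1}(mulr1 (t * P)) ler_pM2l // /c; lra.
have hD : enorm (g y - g a) <= L * (t * P).
  rewrite -tP -ya; apply: Hl; rewrite ?ya ?tP ?subrr ?enorm0 //. lra.
have zsub : (y, g y) - (a, g a) = (t *: p, g y - g a) by rewrite -ya.
have E2le : enorm2 (t *: p, g y - g a) <= t * P * c.
  apply: (le_trans (enorm2_le _)); rewrite /= tP /c; lra.
have E2pos : 0 < enorm2 (t *: p, g y - g a).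
  by apply: (lt_le_trans _ (enorm2_l _)); rewrite /= tP.
have := Hd (y, g y) erefl ltac:(by rewrite zsub) ltac:(rewrite zsub; lra).
rewrite zsub /dotp2 /= dotpZr -enorm_sq -/P => h1.
have h2 : e / c * enorm2 (t *: p, g y - g a) <= e / c * (t * P * c).
  by rewrite ler_wpM2l // ltW // divr_gt0.
have h3 : e / c * (t * P * c) = (t * P) * e by field; rewrite gt_eqF.
have h4 : - dotp q (g y - g a) <= enorm q * (L * (t * P)).
  apply: (le_trans (ler_norm _)); rewrite normrN.
  apply: (le_trans (CS _ _)); by rewrite ler_wpM2l // enorm_ge0.
have h5 : enorm q * (L * (t * P)) = (t * P) * (L * enorm q) by ring.
have h6 : t * P ^+ 2 = (t * P) * P by ring.
have : (t * P) * P <= (t * P) * (L * enorm q + e) by rewrite mulrDr; lra.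
by rewrite ler_pM2l.
Qed.

Lemma limiting_lip (g : V -> V) x z w L r :
  0 < r ->
  (forall y1 y2, enorm (y1 - x) < r -> enorm (y2 - x) < r ->
     enorm (g y1 - g y2) <= L * enorm (y1 - y2)) ->
  limiting_normal (graph g) (x, g x) (z, - w) -> enorm z <= `|L| * enorm w.
Proof.
move=> r0 Hl [zs [vs [H1 H2 H3 H4]]].
apply/ler_addgt0Pr => e e0.
set c := 2 * (1 + `|L|).
have c0 : 0 < c by rewrite /c mulr_gt0 // ltr_pwDl.
set e' := Num.min (e / c) (r / 4).
have e'0 : 0 < e' by rewrite lt_min !divr_gt0.
have [N1 HN1] := H2 e' e'0; have [N2 HN2] := H3 e' e'0.
set k := maxn N1 N2.
have hz := HN1 k (leq_maxl _ _); have hv := HN2 k (leq_maxr _ _).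
have Hk := H4 k.
have zk : zs k = ((zs k).1, g (zs k).1) by rewrite -(H1 k); case: (zs k).
rewrite zk in Hk.
have ak : enorm ((zs k).1 - x) < r / 2.
  apply: (le_lt_trans (enorm2_l (zs k - (x, g x)))).
  apply: (lt_le_trans hz); rewrite ge_min; apply/orP; right; lra.
case E : (vs k) => [p q]; rewrite E in Hk hv.
have := @regular_normal_lip g (zs k).1 p q `|L| (r / 2) ltac:(lra) (normr_ge0 _).
have Hl' : forall y1 y2, enorm (y1 - (zs k).1) < r / 2 ->
    enorm (y2 - (zs k).1) < r / 2 ->
    enorm (g y1 - g y2) <= `|L| * enorm (y1 - y2).
  move=> y1 y2 h1 h2.
  have h1' : enorm (y1 - x) < r.
    have := enormD (y1 - (zs k).1) ((zs k).1 - x); rewrite addrA subrK; lra.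
  have h2' : enorm (y2 - x) < r.
    have := enormD (y2 - (zs k).1) ((zs k).1 - x); rewrite addrA subrK; lra.
  apply: (le_trans (Hl _ _ h1' h2')); by rewrite ler_wpM2r ?enorm_ge0 ?ler_norm.
move=> /(_ Hl' Hk) hpq.
have hp : enorm (p - z) < e' by apply: (le_lt_trans (enorm2_l _) hv).
have hq : enorm (q + w) < e'.
  by have := enorm2_r ((p, q) - (z, - w)); rewrite /= opprK => /le_lt_trans; apply.
have zp : enorm z <= enorm p + e'.
  have := enormD p (z - p); rewrite addrC subrK enorm_sub; lra.
have qw : enorm q <= enorm w + e'.
  have := enormD (q + w) (- w); rewrite addrK enormN; lra.
have e'c : e' <= e / c by rewrite ge_min lexx.
have : `|L| * enorm q <= `|L| * (enorm w + e') by rewrite ler_wpM2l.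
have : `|L| * e' <= `|L| * (e / c) by rewrite ler_wpM2l.
have : (1 + `|L|) * (e / c) = e / 2 by rewrite /c; field; rewrite gt_eqF // ltr_pwDl.
have := normr_ge0 L; have := enorm_ge0 w; nra.
Qed.

End Lip.

Module Compact.
Import numFieldNormedType.Exports.
Local Open Scope classical_set_scope.

Lemma cube_compact (R : realType) n (b : R) :
  compact [set v : 'rV[R]_n | forall i, `[-b, b] (v ord0 i)].
Proof. by apply: (@rV_compact _ _ (fun=> `[-b, b])) => _; exact: segment_compact. Qed.

Lemma cluster_seq (R : realType) n (M : R)
  (p : nat -> 'rV[R]_n * ('rV[R]_n * 'rV[R]_n)) :
  (forall k i, [/\ `|(p k).1 ord0 i| <= M, `|(p k).2.1 ord0 i| <= 1
       & `|(p k).2.2 ord0 i| <= 1]) ->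
  exists q : 'rV[R]_n * ('rV[R]_n * 'rV[R]_n), forall e, 0 < e -> forall N,
    exists k, (N <= k)%N /\ forall i,
      [/\ `|(p k).1 ord0 i - q.1 ord0 i| < e,
          `|(p k).2.1 ord0 i - q.2.1 ord0 i| < e
        & `|(p k).2.2 ord0 i - q.2.2 ord0 i| < e].
Proof.
move=> Hb.
set S := [set v : 'rV[R]_n | forall i, `[-M, M] (v ord0 i)] `*`
   ([set v : 'rV[R]_n | forall i, `[-1, 1] (v ord0 i)] `*`
    [set v : 'rV[R]_n | forall i, `[-1, 1] (v ord0 i)]).
have cS : compact S by apply: compact_setX; [|apply: compact_setX]; apply: cube_compact.
have [|q [Sq cq]] := cS (p @ \oo) _.
  exists 0%N => // k _; have H := Hb k.
  split => [i|]; last split => i; have [h1 h2 h3] := H i; rewrite /= in_itv /= -ler_norml //.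
exists q => e e0 N.
have A1 : (p @ \oo) [set y | exists2 k, (N <= k)%N & y = p k].
  by exists N => // k /= hk; exists k.
have [y [[k hk ->] hb]] := cq _ _ A1 (nbhsx_ballx q e e0).
exists k; split => // i.
move: hb; rewrite /ball /= /prod_ball => -[b1 [b2 b3]].
move: b1 b2 b3; rewrite /ball /= /mx_ball => b1 b2 b3.
have := b1.2 ord0 i; have := b2.2 ord0 i; have := b3.2 ord0 i.
by rewrite /ball /= !(distrC (q.1 _ _)) !(distrC (q.2.1 _ _)) !(distrC (q.2.2 _ _)).
Qed.

Section Main.
Variables (R : realType) (n : nat).
Notation V := 'rV[R]_n.

Lemma phi_cont (phi : V -> R) g x : is_gradient phi g ->
  exists2 d, 0 < d & forall y, enorm (y - x) < d ->
    `|phi y - phi x| <= (enorm (g x) + 1) * enorm (y - x).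
Proof.
move=> H; have [d d0 Hd] := H x 1 ltr01; exists d => // y hy.
have h1 := Hd y hy; have h2 := CS (g x) (y - x).
have := ler_normD (phi y - phi x - dotp (g x) (y - x)) (dotp (g x) (y - x)).
rewrite subrK mulrDl mul1r; lra.
Qed.

Lemma enorm2Z (c : R) (a b : V) : enorm2 (c *: a, c *: b) = `|c| * enorm2 (a, b).
Proof.
rewrite /enorm2 /dotp2 /= !dotpZl !dotpZr !mulrA -expr2 -mulrDr sqrtrM ?sqr_ge0 //.
by rewrite sqrtr_sqr.
Qed.

Lemma dotpZZ (c : R) (a b : V) : dotp (c *: a) (c *: b) = c * (c * dotp a b).
Proof. by rewrite dotpZl dotpZr. Qed.

Lemma small_frac (e : R) : 0 < e -> n%:R * (e / n.+1%:R) < e.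
Proof.
move=> e0; set a := e / n.+1%:R.
have a0 : 0 < a by rewrite divr_gt0.
have : a * n.+1%:R = e by rewrite /a divfK // pnatr_eq0.
rewrite -addn1 natrD mulrDr mulr1 mulrC; lra.
Qed.

End Main.

End Compact.
Import Compact.

Theorem lemma3p6 (R : realType) (n : nat) (phi : 'rV[R]_n -> R)
    (g : 'rV[R]_n -> 'rV[R]_n) (x0 : 'rV[R]_n) :
  C11 phi g ->
  (forall x, phi x <= phi x0 ->
     forall u z, u != 0 -> gen_hessian g x u z -> 0 < dotp z u) ->
  (exists M : R, forall x, phi x <= phi x0 -> enorm x <= M) ->
  exists2 kappa : R, 0 < kappa &
    forall x, phi x <= phi x0 ->
      forall w z, gen_hessian g x w z -> kappa * enorm w ^+ 2 <= dotp z w.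
Proof.
move=> [Hgrad Hgc Hlip] Hpos [M HM].
apply: contrapT => Hno.
have H1 : forall k : nat, exists t : 'rV[R]_n * ('rV[R]_n * 'rV[R]_n),
  [/\ phi t.1 <= phi x0, gen_hessian g t.1 t.2.1 t.2.2
    & dotp t.2.2 t.2.1 < (k.+1%:R)^-1 * enorm t.2.1 ^+ 2].
  move=> k; apply: contrapT => Hk; apply: Hno; exists (k.+1%:R^-1).
    by rewrite invr_gt0 ltr0Sn.
  move=> x hx w z hz; rewrite leNgt; apply/negP => hlt; apply: Hk.
  by exists (x, (w, z)).
have [f Hf] := choice H1.
pose xs k := (f k).1. pose w k := (f k).2.1. pose z k := (f k).2.2.
have wpos : forall k, 0 < enorm (w k).
  move=> k; rewrite lt_neqAle enorm_ge0 andbT; apply/eqP => /esym/enorm_eq0 h.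
  by case: (Hf k) => _ _; rewrite -/(w k) -/(z k) h dotp0r enorm0 expr0n mulr0 ltxx.
pose s k := enorm2 (w k, z k).
have spos : forall k, 0 < s k by move=> k; apply: (lt_le_trans (wpos k)); exact: (enorm2_l (w k, z k)).
pose w' k := (s k)^-1 *: w k. pose z' k := (s k)^-1 *: z k.
have sinv0 : forall k, 0 < (s k)^-1 by move=> k; rewrite invr_gt0.
have s1 : forall k, enorm2 (w' k, z' k) = 1.
  by move=> k; rewrite enorm2Z gtr0_norm // mulVf // gt_eqF.
have w'1 : forall k, enorm (w' k) <= 1 by move=> k; rewrite -(s1 k); exact: (enorm2_l (w' k, z' k)).
have z'1 : forall k, enorm (z' k) <= 1 by move=> k; rewrite -(s1 k); exact: (enorm2_r (w' k, z' k)).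
have Pphi : forall k, phi (xs k) <= phi x0 by move=> k; case: (Hf k).
have Phess : forall k, gen_hessian g (xs k) (w' k) (z' k).
  move=> k; case: (Hf k) => _ h _; rewrite /gen_hessian /coderiv /w' -scalerN.
  exact: limiting_scale.
have Pdot : forall k, dotp (z' k) (w' k) < (k.+1%:R)^-1.
  move=> k; case: (Hf k) => _ _; rewrite -/(w k) -/(z k) => h.
  rewrite /z' /w' dotpZZ.
  have ws : enorm (w k) ^+ 2 <= s k ^+ 2.
    by rewrite !expr2; apply: ler_pM; rewrite ?enorm_ge0 //; exact: (enorm2_l (w k, z k)).
  have i0 : 0 < (k.+1%:R : R)^-1 by rewrite invr_gt0 ltr0Sn.
  have h2 : dotp (z k) (w k) < (k.+1%:R)^-1 * s k ^+ 2.
    by apply: (lt_le_trans h); rewrite ler_pM2l.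
  rewrite -(ltr_pM2l (sinv0 k)) -(ltr_pM2l (sinv0 k)) in h2.
  apply: (lt_le_trans h2); rewrite le_eqVlt; apply/orP; left; apply/eqP.
  have E : forall a b : R, a != 0 -> a^-1 * (a^-1 * (b * a ^+ 2)) = b.
    by move=> a b a0; field.
  by rewrite E // gt_eqF.
have [q Hq] := @cluster_seq R n M (fun k => (xs k, (w' k, z' k))) ltac:(
  move=> k i /=; split;
  [exact: le_trans (enorm_coord _ _) (HM _ (Pphi k))
  |exact: le_trans (enorm_coord _ _) (w'1 k)
  |exact: le_trans (enorm_coord _ _) (z'1 k)]).
set X := q.1; set Wq := q.2.1; set Zq := q.2.2.
have Hclose : forall e, 0 < e -> forall N, exists k, [/\ (N <= k)%N,
    enorm (xs k - X) < e, enorm (w' k - Wq) < e & enorm (z' k - Zq) < e].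
  move=> e e0 N.
  have e'0 : 0 < e / n.+1%:R by rewrite divr_gt0 // ltr0Sn.
  have [k [hk Hk]] := Hq _ e'0 N; exists k.
  have B : forall u v : 'rV[R]_n, (forall i, `|u ord0 i - v ord0 i| < e / n.+1%:R) ->
      enorm (u - v) < e.
    move=> u v huv; apply: (le_lt_trans _ (small_frac n e0)).
    apply: enorm_coord_bound; first exact: ltW.
    by move=> i; rewrite !mxE ltW.
  by split => //; apply: B => i; case: (Hk i).
have HA : phi X <= phi x0.
  apply/ler_addgt0Pr => e e0.
  have [d d0 Hd] := phi_cont X Hgrad.
  set K := enorm (g X) + 1.
  have K0 : 0 < K by rewrite /K ltr_wpDl ?enorm_ge0.
  have e10 : 0 < Num.min d (e / K) by rewrite lt_min d0 divr_gt0.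
  have [k [_ hx _ _]] := Hclose _ e10 0%N.
  have hxd : enorm (xs k - X) < d by apply: (lt_le_trans hx); rewrite ge_min lexx.
  have hxe : enorm (xs k - X) <= e / K by apply: ltW; apply: (lt_le_trans hx); rewrite ge_min lexx orbT.
  have := Hd _ hxd.
  have : K * enorm (xs k - X) <= K * (e / K) by rewrite ler_pM2l.
  have -> : K * (e / K) = e by field; rewrite gt_eqF.
  rewrite -/K => h1 h2.
  have := Pphi k; have := ler_norm (phi X - phi (xs k)); rewrite distrC.
  lra.
have HB : ~ (Wq = 0 /\ Zq = 0).
  move=> [W0 Z0].
  have [k [_ _ hw hz]] := Hclose (1 / 2) ltac:(lra) 0%N.
  move: hw hz; rewrite W0 Z0 !subr0 => hw hz.
  have := enorm2_le (w' k, z' k); rewrite s1 /=; lra.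
have HC : dotp Zq Wq <= 0.
  apply/ler_addgt0Pr => e e0; rewrite add0r.
  have [N HN] := archi_inv (ltac:(lra) : 0 < e / 2).
  have e10 : 0 < Num.min 1 (e / 8) by rewrite lt_min ltr01; lra.
  have [k [hk _ hw hz]] := Hclose _ e10 N.
  have hw1 : enorm (w' k - Wq) <= 1 by apply: ltW; apply: (lt_le_trans hw); rewrite ge_min lexx.
  have hw8 : enorm (w' k - Wq) <= e / 8 by apply: ltW; apply: (lt_le_trans hw); rewrite ge_min lexx orbT.
  have hz8 : enorm (z' k - Zq) <= e / 8 by apply: ltW; apply: (lt_le_trans hz); rewrite ge_min lexx orbT.
  have hWq : enorm Wq <= 2.
    have := enormD (Wq - w' k) (w' k); rewrite subrK enorm_sub; have := w'1 k; lra.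
  have E : dotp Zq Wq = dotp (z' k) (w' k) + dotp (Zq - z' k) Wq + dotp (z' k) (Wq - w' k).
    by rewrite dotpBl dotpBr; ring.
  have c1 : dotp (Zq - z' k) Wq <= e / 8 * 2.
    apply: (le_trans (CS' _ _)); apply: ler_pM; rewrite ?enorm_ge0 // enorm_sub //.
  have c2 : dotp (z' k) (Wq - w' k) <= 1 * (e / 8).
    apply: (le_trans (CS' _ _)); apply: ler_pM; rewrite ?enorm_ge0 //.
    by rewrite enorm_sub.
  have := lt_trans (Pdot k) (HN k hk); rewrite E; lra.
have HD : gen_hessian g X Wq Zq.
  apply: limiting_closed => e e0.
  have [d d0 Hd] := Hgc X (e / 2) ltac:(lra).
  have e10 : 0 < Num.min d (e / 2) by rewrite lt_min d0; lra.
  have [k [_ hx hw hz]] := Hclose _ e10 0%N.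
  have hxd : enorm (xs k - X) < d by apply: (lt_le_trans hx); rewrite ge_min lexx.
  have hxe : enorm (xs k - X) < e / 2 by apply: (lt_le_trans hx); rewrite ge_min lexx orbT.
  have hwe : enorm (w' k - Wq) < e / 2 by apply: (lt_le_trans hw); rewrite ge_min lexx orbT.
  have hze : enorm (z' k - Zq) < e / 2 by apply: (lt_le_trans hz); rewrite ge_min lexx orbT.
  have hg := Hd _ hxd.
  exists (xs k, g (xs k)), (z' k, - w' k); split.
  - exact: Phess.
  - apply: (le_lt_trans (enorm2_le _)) => /=; lra.
  - apply: (le_lt_trans (enorm2_le _)) => /=.
    rewrite -opprD enormN; lra.
have [L [r r0 Hl]] := Hlip X.
have HE := limiting_lip r0 Hl HD.
have HF : Wq != 0.
  apply/eqP => W0; apply: HB; split => //.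
  move: HE; rewrite W0 enorm0 mulr0 => h; apply: enorm_eq0.
  by apply/eqP; rewrite eq_le h enorm_ge0.
have := Hpos X HA Wq Zq HF HD; lra.
Qed.
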